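(* Let $\mathcal{V}$ be the complex vector space spanned by $\phi_k(x)=(x\frac{d}{dx})^k\big(\frac{1}{1-x}\big)$, $k\in\mathbb{N}=\{0,1,2,\dots\}$. If a nonzero $f\in\mathcal{V}$ is an eigenfunction of $U_p$ for some integer $p\ge2$, then $f$ is an eigenfunction of $U_q$ for every integer $q\ge2$.
   Context: For a power series $f(x)=\sum_{n\ge0}a_nx^n$ (in particular the Taylor expansion at $0$ of a rational function regular at $0$) and a positive integer $q$, $U_qf(x)=\sum_{n\ge0}a_{qn}x^n$. *)

(* Defs.v *)
From HB Require Import structures.
From mathcomp Require Import all_boot all_order all_algebra.
From mathcomp Require Import reals.
From mathcomp.real_closed Require Import complex.
Set Implicit Arguments. Unset Strict Implicit. Unset Printing Implicit Defensive.
Import Order.TTheory GRing.Theory Num.Theory.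
Local Open Scope ring_scope.

(* A (formal) power series sum_n a_n x^n is represented by its coefficient
   sequence a : nat -> C. *)
Definition pseries (C : Type) := nat -> C.

(* The Euler operator x d/dx on power series: sum a_n x^n |-> sum n a_n x^n. *)
Definition theta {C : nzRingType} (a : pseries C) : pseries C :=
  fun n => n%:R * a n.

(* Taylor expansion at 0 of 1/(1-x) = sum_n x^n. *)
Definition geom {C : nzRingType} : pseries C := fun _ => 1.

Definition phi {C : nzRingType} (k : nat) : pseries C := iter k theta geom.

Definition inV {C : nzRingType} (f : pseries C) : Prop :=
  exists (m : nat) (c : nat -> C), f = fun n => \sum_(k < m) c k * phi k n.

Definition U {C : Type} (q : nat) (f : pseries C) : pseries C :=
  fun n => f (q * n)%N.

Definition eigenfunction {C : nzRingType} (q : nat) (f : pseries C) : Prop :=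
  (exists n, f n != 0) /\ exists lam : C, U q f = fun n => lam * f n.

(* Main.v *)
Require Import Defs.
From HB Require Import structures.
From mathcomp Require Import all_boot all_order all_algebra.
From mathcomp Require Import reals.
From mathcomp.real_closed Require Import complex.
Local Open Scope ring_scope.
From mathcomp Require Import ring.
From Stdlib Require Import FunctionalExtensionality.
Import GRing.Theory Num.Theory.

Lemma phiE (C : nzRingType) k n : @phi C k n = n%:R ^+ k.
Proof.
elim: k => [|k IH] //=; rewrite /phi /= in IH *.
by rewrite /theta IH exprS.
Qed.

Section S.
Variable R : realType.
Local Notation C := (R[i]).

Lemma natr_inj_C : injective (fun n : nat => (n%:R : C)).
Proof. by move=> a b /eqP; rewrite eqr_nat => /eqP. Qed.

Lemma poly_nat_zero (m : nat) (d : nat -> C) :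
  (forall n : nat, \sum_(k < m) d k * (n%:R : C) ^+ k = 0) ->
  forall k, (k < m)%N -> d k = 0.
Proof.
move=> H k km.
pose Q := \poly_(i < m) d i.
have -> : d k = Q`_k by rewrite coef_poly km.
suff -> : Q = 0 by rewrite coef0.
apply/eqP; apply: contraT => Qn0.
have := max_poly_roots Qn0 (rs := [seq (i%:R : C) | i <- iota 0 m]).
rewrite size_map size_iota map_inj_uniq ?iota_uniq; last exact: natr_inj_C.
have -> : all (root Q) [seq (i%:R : C) | i <- iota 0 m].
  apply/allP => x /mapP [i _ ->]; by rewrite /root horner_poly H.
move=> /(_ isT isT); rewrite ltnNge.
by have := size_poly m d => ->.
Qed.

End S.

Theorem mainTheorem16 (R : realType) (f : pseries R[i]) (p : nat) :
  inV f -> (2 <= p)%N -> eigenfunction p f ->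
  forall q : nat, (2 <= q)%N -> eigenfunction q f.
Proof.
move=> [m [c ->]] p2 [[n0 nz] [lam Hlam]] q q2.
split; first by exists n0.
have Hd : forall k, (k < m)%N -> c k * ((p%:R : R[i]) ^+ k - lam) = 0.
  apply: (@poly_nat_zero R m (fun k => c k * (p%:R ^+ k - lam))) => n.
  have := congr1 (fun g => g n) Hlam; rewrite /U /= => E.
  rewrite [LHS](_ : _ = \sum_(k < m) c k * phi k (p * n)%N
      - lam * \sum_(k < m) c k * phi k n); first by rewrite E subrr.
  rewrite mulr_sumr -sumrB; apply: eq_bigr => k _.
  by rewrite !phiE natrM exprMn; ring.
have /existsP [[k0 k0m] /= ck0] : [exists k : 'I_m, c k != 0].
  move: nz => /=; apply: contraTT; rewrite negb_exists => /forallP H.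
  apply/negPn/eqP/big1 => k _; by rewrite (eqP (negPn (H k))) mul0r.
have lamE : lam = p%:R ^+ k0.
  have := Hd k0 k0m; move/eqP; rewrite mulf_eq0 (negbTE ck0) /= subr_eq0.
  by move/eqP.
have cz : forall k, (k < m)%N -> k != k0 -> c k = 0.
  move=> k km kk0; have := Hd k km; move/eqP; rewrite mulf_eq0 => /orP [/eqP //|].
  rewrite lamE subr_eq0 -!natrX eqr_nat eqn_exp2l //.
  by rewrite (negbTE kk0).
exists ((q%:R : R[i]) ^+ k0); apply: functional_extensionality => n; rewrite /U mulr_sumr.
apply: eq_bigr => [[k km]] _ /=; rewrite !phiE.
case: (eqVneq k k0) => [->|kk0].
  by rewrite natrM exprMn mulrA mulrCA mulrA.
rewrite cz //.
by rewrite !mul0r mulr0.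
Qed.
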